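(* Every Pisot number $q \in (1, 1.933]$ satisfies $|q'| \geq \frac{\sqrt5-1}{2}$ for all Galois conjugates $q'$ of $q$.
   Context: A Pisot number is a real algebraic integer $q>1$ all of whose other Galois conjugates have absolute value strictly less than $1$. *)

(* Defs.v *)
From HB Require Import structures.
From mathcomp Require Import all_boot all_order all_algebra all_field.
Set Implicit Arguments. Unset Strict Implicit. Unset Printing Implicit Defensive.
Import Order.TTheory GRing.Theory Num.Theory.
Local Open Scope ring_scope.

Definition galois_conjugate (q z : algC) : bool := root (minCpoly q) z.

Definition pisot (q : algC) : Prop :=
  [/\ q \is Creal, 1 < q, q \in Aint &
      forall z : algC, galois_conjugate q z -> z != q -> `|z| < 1].

(* Main.v *)
Require Import Defs.
From HB Require Import structures.
From mathcomp Require Import all_boot all_order all_algebra all_field.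
From mathcomp Require Import ring lra zify.
Import Order.TTheory GRing.Theory Num.Theory.
Local Open Scope ring_scope.

Lemma int_small (e : int) : -2 < e -> e < 2 -> e != 0 -> (e = 1) \/ (e = -1).
Proof. move=> *; lia. Qed.
Lemma int_23 (m : int) : 2 < m -> m < 3 -> False.
Proof. move=> *; lia. Qed.
Lemma int_02 (m : int) : 0 < m -> m < 2 -> m = 1.
Proof. move=> *; lia. Qed.

Section R2.
Variable R : realFieldType.
Lemma deg2 (q z : R) (m e : int) : 1 < q -> 1000 * q <= 1933 -> `|z| < 1 ->
  q * z = e%:~R -> e != 0 -> q + z = m%:~R -> 1 <= `|z| ^+ 2 + `|z|.
Proof.
move=> q1 q2 z1 hqz e0 hm.
have q3 : q < 2 by lra.
move: z1; rewrite ltr_norml => /andP [zl zh].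
have eb1 : (-2 : R) < e%:~R.
  rewrite -hqz. have : - q < q * z by nra. lra.
have eb2 : e%:~R < (2 : R).
  rewrite -hqz. have : q * z < q by nra. lra.
have eb1' : -2 < e by rewrite -(ltr_int R).
have eb2' : e < 2 by rewrite -(ltr_int R).
case: (@int_small e eb1' eb2' e0) => ee; rewrite ee in hqz.
- exfalso.
  have z0 : 0 < z by nra.
  have m2 : (2 : R) < m%:~R by rewrite -hm; nra.
  have m3 : m%:~R < (3 : R) by rewrite -hm; lra.
  apply: (@int_23 m); by rewrite -(ltr_int R).
- have z0 : z < 0 by nra.
  have m0 : (0 : R) < m%:~R by rewrite -hm; lra.
  have m2 : m%:~R < (2 : R) by rewrite -hm; lra.
  have m1 : m = 1 by apply: int_02; rewrite -(ltr_int R).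
  rewrite m1 in hm.
  rewrite ltr0_norm //.
  have hm' : q + z = 1 by rewrite hm.
  have hqz' : q * z = -1 by rewrite hqz.
  have ez : z = 1 - q by lra.
  rewrite ez in hqz' *. nra.
Qed.
End R2.

Section RealLemmas.
Variable R : realFieldType.
Implicit Types p r : R.

Lemma ineqA p r : 1 < p -> 0 < r -> r * r + r < 1 -> 2 * p * r < (p+1) * (p+r) * (1-r).
Proof.
move=> *. have h1 : r < 2/3 by nra.
have h2 : 0 <= (1-r) * ((p-1) * (p-1)) by apply: mulr_ge0; nra.
have h3 : 0 < (3-4 * r-r * r) * (p-1) by apply: mulr_gt0; nra.
nra.
Qed.

Lemma ineqB p r : 1<p -> 0<r -> r * r + r < 1 -> 1000  *  p <= 1933 * r -> (p+1) * (p-r) * (1+r) < 3 * p * r.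
Proof.
move=> *. have h1 : r < 2/3 by nra. have h0 : 1000 < 1933 * r by lra.
have h2 : 0 <= (1+r) * ((p-1) * (1933 * r-1000 * p)) by apply: mulr_ge0; nra.
nra.
Qed.

Lemma ineqC p r : 1<p -> 0<r -> r * r + r < 1 -> 1000  *  p <= 1933 * r -> (p-1) * (p+r) * (1+r) < p * r.
Proof.
move=> *. have h1 : r < 2/3 by nra. have h0 : 1000 < 1933 * r by lra.
have h2 : 0 <= (1+r) * ((p-1) * (1933 * r-1000 * p)) by apply: mulr_ge0; nra.
nra.
Qed.

Lemma realkey (q z : R) (k : int) : 1 < q -> 1000 * q <= 1933 -> 1 < q * `|z| ->
  `|q * z * k%:~R - (q + z) * (q * z - 1)| <= (q * z) ^+ 2 - 1 -> 1 <= `|z| ^+ 2 + `|z|.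
Proof.
move=> q1 q2 qz1 hk.
rewrite leNgt; apply/negP => hlt.
have [z0|z0] := ltrP 0 z.
- rewrite gtr0_norm // in qz1 hlt.
  move: hk; rewrite ler_norml => /andP [hlo hhi].
  set p := q * z in qz1 hlo hhi.
  have r1 : z < 1 by have := sqr_ge0 z; lra.
  have kpos : 0 < (k%:~R : R).
    have : 0 < (p - 1) * (q - 1) * (1 - z) by rewrite !mulr_gt0 // subr_gt0.
    have -> : (p - 1) * (q - 1) * (1 - z) = (q + z) * (p - 1) - (p ^+ 2 - 1) by rewrite /p; ring.
    move=> h. have : 0 < p * k%:~R by lra.
    by rewrite pmulr_rgt0 // (lt_trans ltr01 qz1).
  have k1 : 1 <= (k%:~R : R) by rewrite ler1z -gtz0_ge1 -(ltr0z R).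
  have hp : 1000 * p <= 1933 * z by rewrite /p mulrA ler_wpM2r // ltW.
  have hz2 : z * z + z < 1 by rewrite -expr2.
  have := @ineqC p z qz1 z0 hz2 hp.
  have : p <= (p - 1) * (q + 1) * (z + 1).
    have -> : (p - 1) * (q + 1) * (z + 1) = (p ^+ 2 - 1) + (q + z) * (p - 1) by rewrite /p; ring.
    have pk : p <= p * k%:~R by rewrite ler_peMr // ltW // (lt_trans ltr01 qz1).
    lra.
  move=> h1 h2.
  have : p * z <= (p - 1) * (q + 1) * (z + 1) * z by rewrite ler_wpM2r // ltW.
  have -> : (p - 1) * (q + 1) * (z + 1) * z = (p - 1) * (p + z) * (1 + z) by rewrite /p; ring.
  lra.
- have zn : z < 0.
    rewrite lt_neqAle z0 andbT; apply/eqP => e; move: qz1; rewrite e normr0 mulr0; lra.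
  rewrite ltr0_norm // in qz1 hlt.
  set r := - z in qz1 hlt.
  have r0 : 0 < r by rewrite /r oppr_gt0.
  have ez : z = - r by rewrite /r opprK.
  rewrite ez in hk.
  move: hk; rewrite ler_norml => /andP [hlo hhi].
  set p := q * r in qz1 hlo hhi.
  have hp : 1000 * p <= 1933 * r by rewrite /p mulrA ler_wpM2r // ltW.
  have e1 : q * - r * k%:~R - (q + - r) * (q * - r - 1) = - (p * k%:~R - (q - r) * (p + 1)) by rewrite /p; ring.
  have e2 : (q * - r) ^+ 2 - 1 = p ^+ 2 - 1 by rewrite /p; ring.
  rewrite e1 e2 in hlo hhi.
  have lo : (p + 1) * (q + 1) * (1 - r) <= p * k%:~R.
    have -> : (p + 1) * (q + 1) * (1 - r) = (q - r) * (p + 1) - (p ^+ 2 - 1) by rewrite /p; ring.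
    lra.
  have hi : p * k%:~R <= (p + 1) * (q - 1) * (1 + r).
    have -> : (p + 1) * (q - 1) * (1 + r) = (q - r) * (p + 1) + (p ^+ 2 - 1) by rewrite /p; ring.
    lra.
  have hr2 : r * r + r < 1 by rewrite -expr2.
  have hA := @ineqA p r qz1 r0 hr2.
  have hB := @ineqB p r qz1 r0 hr2 hp.
  have lo' : (p + 1) * (p + r) * (1 - r) <= p * r * k%:~R.
    have -> : (p + 1) * (p + r) * (1 - r) = (p + 1) * (q + 1) * (1 - r) * r by rewrite /p; ring.
    have -> : p * r * k%:~R = p * k%:~R * r by ring.
    by rewrite ler_wpM2r // ltW.
  have hi' : p * r * k%:~R <= (p + 1) * (p - r) * (1 + r).
    have -> : (p + 1) * (p - r) * (1 + r) = (p + 1) * (q - 1) * (1 + r) * r by rewrite /p; ring.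
    have -> : p * r * k%:~R = p * k%:~R * r by ring.
    by rewrite ler_wpM2r // ltW.
  have pr0 : 0 < p * r by rewrite mulr_gt0 // (lt_trans ltr01 qz1).
  have k2 : (2 : R) < k%:~R.
    rewrite -(ltr_pM2l pr0); lra.
  have k3 : (3 : R) <= k%:~R.
    have : (2 : int) < k by rewrite -(ltr_int R).
    move=> h; have h3 : (3 : int) <= k by rewrite -lezD1 in h.
    by rewrite (_ : 3 = (3:int)%:~R) // ler_int.
  have : 3 * p * r <= p * r * k%:~R.
    rewrite -mulrA [p * r * _]mulrC; apply: ler_wpM2r => //; exact: ltW.
  lra.
Qed.
End RealLemmas.

Lemma lt_algR (x y : algR) : (x < y) = (algRval x < algRval y). Proof. by []. Qed.
Lemma le_algR (x y : algR) : (x <= y) = (algRval x <= algRval y). Proof. by []. Qed.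
Lemma norm_algR (x : algR) : algRval `|x| = `|algRval x|. Proof. by []. Qed.

Lemma realkeyC (q z : algC) (k : int) : q \is Creal -> z \is Creal -> 1 < q -> 1000 * q <= 1933 -> 1 < q * `|z| ->
  `|q * z * k%:~R - (q + z) * (q * z - 1)| <= (q * z) ^+ 2 - 1 -> 1 <= `|z| ^+ 2 + `|z|.
Proof.
move=> qR zR h1 h2 h3 h4.
pose Q := in_algR qR; pose Z := in_algR zR.
have H1 : 1 < Q by exact: h1.
have H3 : 1 < Q * `|Z| by exact: h3.
have H2 : 1000 * Q <= 1933 by rewrite le_algR rmorphM !rmorph_nat; exact: h2.
have H4 : `|Q * Z * k%:~R - (Q + Z) * (Q * Z - 1)| <= (Q * Z) ^+ 2 - 1.
  rewrite le_algR norm_algR !expr2 !(rmorphB, rmorphM, rmorphD, rmorphN, rmorph1, rmorph_int).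
  rewrite expr2 in h4; exact: h4.
have := @realkey algR Q Z k H1 H2 H3 H4.
rewrite le_algR !expr2 !(rmorphD, rmorphM, rmorph1).
exact.
Qed.

Lemma deg2C (q z : algC) (m e : int) : q \is Creal -> z \is Creal -> 1 < q -> 1000 * q <= 1933 -> `|z| < 1 ->
  q * z = e%:~R -> e != 0 -> q + z = m%:~R -> 1 <= `|z| ^+ 2 + `|z|.
Proof.
move=> qR zR h1 h2 h3 h4 h5 h6.
pose Q := in_algR qR; pose Z := in_algR zR.
have H1 : 1 < Q by exact: h1.
have H2 : 1000 * Q <= 1933 by rewrite le_algR rmorphM !rmorph_nat; exact: h2.
have H3 : `|Z| < 1 by exact: h3.
have H4 : Q * Z = e%:~R by apply: val_inj; rewrite rmorphM rmorph_int; exact: h4.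
have H6 : Q + Z = m%:~R by apply: val_inj; rewrite rmorphD rmorph_int; exact: h6.
have := @deg2 algR Q Z m e H1 H2 H3 H4 h5 H6.
rewrite le_algR !expr2 !(rmorphD, rmorphM, rmorph1).
exact.
Qed.

Lemma coefXsubCM0 (a : algC) (C : {poly algC}) :
  (('X - a%:P) * C)`_0 = - a * C`_0.
Proof. by rewrite mulrBl coefB coefXM coefCM /= sub0r mulNr. Qed.

Lemma coefXsubCM1 (a : algC) (C : {poly algC}) :
  (('X - a%:P) * C)`_1 = C`_0 - a * C`_1.
Proof. by rewrite mulrBl coefB coefXM coefCM. Qed.

Lemma schur (s : seq algC) : all (fun a => `|a| <= 1) s ->
  `|(\prod_(a <- s) ('X - a%:P))`_0| <= 1 /\
  `|(\prod_(a <- s) ('X - a%:P))`_1 + (\prod_(a <- s) ('X - a%:P))`_0 * (\sum_(a <- s) a)^*|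
     <= 1 - `|(\prod_(a <- s) ('X - a%:P))`_0| ^+ 2.
Proof.
elim: s => [|a s IH] /=.
  rewrite !big_nil !coefC /=. by rewrite normr1 expr1n subrr rmorph0 mulr0 addr0 normr0.
case/andP=> ha /IH [h0 h1].
rewrite !big_cons coefXsubCM0 coefXsubCM1.
set c0 := _`_0 in h0 h1 *; set c1 := _`_1 in h1 *; set sg := \sum_(_ <- _) _ in h1 *.
have ->: c0 - a * c1 + - a * c0 * (a + sg)^* = (1 - `|a| ^+ 2) * c0 - a * (c1 + c0 * sg^*).
  by rewrite normCK rmorphD /=; ring.
have hA : 0 <= `|a| by [].
have hK : 0 <= `|c0| by [].
split; first by rewrite normrM normrN mulr_ile1.
rewrite normrM normrN exprMn.
apply: (le_trans (ler_normB _ _)).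
rewrite normrM normrM.
have e1 : `|1 - `|a| ^+ 2| = 1 - `|a| ^+ 2.
  by apply/ger0_norm; rewrite subr_ge0 exprn_ile1.
rewrite e1.
have step : `|a| * `|c1 + c0 * sg^*| <= `|a| * (1 - `|c0| ^+ 2) by apply: ler_wpM2l.
apply: (le_trans (lerD (lexx _) step)).
rewrite -subr_ge0.
have -> : 1 - `|a| ^+ 2 * `|c0| ^+ 2 - ((1 - `|a| ^+ 2) * `|c0| + `|a| * (1 - `|c0| ^+ 2))
   = (1 - `|a|) * (1 - `|c0|) * (1 - `|a| * `|c0|) by ring.
by rewrite !mulr_ge0 // subr_ge0 // mulr_ile1.
Qed.

Lemma golden (r : algC) : 0 <= r -> 1 <= r ^+ 2 + r -> (sqrtC 5 - 1) / 2 <= r.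
Proof.
move=> r0 h.
rewrite ler_pdivrMr ?ltr0n // lerBlDr.
have hs : 0 <= r * 2 + 1 by rewrite addr_ge0 ?mulr_ge0 ?ler0n.
rewrite -ler_sqr ?nnegrE ?sqrtC_ge0 ?ler0n // sqrtCK.
have -> : (r * 2 + 1) ^+ 2 = 4 * (r ^+ 2 + r) + 1 by ring.
have -> : (5 : algC) = 4 * 1 + 1 by ring.
by rewrite lerD2r ler_wpM2l ?ler0n.
Qed.

Section MinPoly.
Variable q : algC.
Hypothesis q0 : q != 0.

Lemma min_size p : minCpoly q = map_poly ratr p ->
  (forall r, root (map_poly ratr r) q = (p %| r)) ->
  forall r, r != 0 -> root (map_poly ratr r) q -> (size p <= size r)%N.
Proof. by move=> _ pmin r r0; rewrite pmin; apply: dvdp_leq. Qed.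

Lemma simple_root : ~~ root (minCpoly q)^`() q.
Proof.
have [p [Dp pmon] pmin] := minCpolyP q.
rewrite Dp deriv_map pmin; apply/negP => hd.
have sp : (1 < size p)%N by rewrite -(size_map_poly (ratr : {rmorphism rat -> algC})) -Dp size_minCpoly.
have d0 : p^`() != 0.
  apply/eqP => /(congr1 (fun r : {poly rat} => r`_(size p).-2)).
  rewrite coef_deriv coef0 prednK; last by rewrite -ltnS prednK // ltnW.
  have := monicP pmon; rewrite lead_coefE => ->.
  by move/eqP; rewrite pnatr_eq0; case: (size p) sp => [|[|n]].
have := dvdp_leq d0 hd.
have := lt_size_deriv (monic_neq0 pmon).
by move=> h1 h2; move: (leq_ltn_trans h2 h1); rewrite ltnn.
Qed.

Lemma nonzero_root : ~~ root (minCpoly q) 0.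
Proof.
have [p [Dp pmon] pmin] := minCpolyP q.
apply/negP; rewrite Dp -(rmorph0 (ratr : {rmorphism rat -> algC})) fmorph_root.
rewrite -dvdp_XsubCl => /dvdpP [r Dr].
have r0 : r != 0 by apply: contraTneq (monic_neq0 pmon) => r0; rewrite Dr r0 mul0r eqxx.
have hr : root (map_poly ratr r) q.
  have := root_minCpoly q; rewrite Dp Dr rmorphM /= rootM => /orP [//|].
  rewrite map_polyXsubC /= rmorph0 root_XsubC => /eqP h.
  by move: q0; rewrite h eqxx.
have hpr : p %| r by rewrite -pmin.
have := dvdp_leq r0 hpr.
rewrite Dr size_Mmonic ?monicXsubC // size_XsubC addn2 /=.
by rewrite ltnn.
Qed.

Lemma conj_root z : root (minCpoly q) z -> root (minCpoly q) z^*.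
Proof.
have [p [Dp pmon] pmin] := minCpolyP q.
rewrite Dp => hz.
have := rmorph_root (Num.conj_op : {rmorphism algC -> algC}) hz.
suff -> : map_poly (Num.conj_op : {rmorphism algC -> algC}) (map_poly ratr p) = map_poly ratr p by [].
by apply/polyP => i; rewrite !coef_map /= fmorph_rat.
Qed.
End MinPoly.


Lemma c0_le (s : seq algC) b : b \in s -> all (fun a => `|a| <= 1) s ->
  `|(\prod_(a <- s) ('X - a%:P))`_0| <= `|b|.
Proof.
move=> bs hall.
rewrite (perm_big _ (perm_to_rem bs)) big_cons coefXsubCM0 normrM normrN.
apply: ler_piMr => //.
have hall' : all (fun a => `|a| <= 1) (rem b s).
  by apply/allP => a /mem_rem ha; exact: (allP hall a ha).
by case: (schur _ hall').
Qed.

Theorem theorem5p1 (q : algC) :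
  pisot q -> q <= 1933%:R / 1000%:R ->
  forall z : algC, galois_conjugate q z -> (sqrtC 5 - 1) / 2 <= `|z|.
Proof.
case=> qR q1 qA hc qle z hz.
have q0 : 0 < q := lt_trans ltr01 q1.
have qn0 : q != 0 by rewrite gt_eqF.
have q2 : 1000 * q <= 1933 by rewrite mulrC -ler_pdivlMr ?ltr0n.
have qlt2 : q < 2.
  apply: (le_lt_trans _ (_ : 1933 / 1000 < 2)); first by [].
  by rewrite ltr_pdivrMr ?ltr0n // -natrM ltr_nat.
apply: golden => //.
have [ezq|nzq] := eqVneq z q.
  rewrite ezq (ger0_norm (ltW q0)).
  apply: (le_trans (ltW q1)); rewrite lerDr; exact: exprn_ge0 (ltW q0).
set P := minCpoly q.
have PZ : P \is a polyOver Num.int := qA.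
have PZi := polyOverP PZ.
have [rs Prs] := closed_field_poly_normal P.
rewrite (monicP (minCpoly_monic q)) scale1r in Prs.
have hzP : root P z := hz.
have hqP : root P q := root_minCpoly q.
have qrs : q \in rs by rewrite -root_prod_XsubC -Prs.
set rs1 := rem q rs.
have P1 : P = ('X - q%:P) * \prod_(a <- rs1) ('X - a%:P).
  by rewrite Prs (perm_big _ (perm_to_rem qrs)) big_cons.
have qn1 : q \notin rs1.
  apply/negP => h.
  have : root (\prod_(a <- rs1) ('X - a%:P)) q by rewrite root_prod_XsubC.
  move/rootP => h0.
  have := simple_root q; rewrite -/P P1 derivM derivXsubC mul1r.
  by rewrite /root hornerD hornerM hornerXsubC subrr mul0r addr0 h0 eqxx.
have hsmall : forall a, a \in rs1 -> `|a| < 1.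
  move=> a ha; apply: hc.
  - by rewrite /galois_conjugate -/P P1 rootM root_prod_XsubC ha orbT.
  - by apply: contraNneq qn1 => <-.
have in_rs1 : forall a, root P a -> a != q -> a \in rs1.
  move=> a ha naq.
  have : a \in rs by rewrite -root_prod_XsubC -Prs.
  by rewrite (perm_mem (perm_to_rem qrs)) inE (negPf naq).
have zrs1 : z \in rs1 := in_rs1 z hzP nzq.
have z1 : `|z| < 1 := hsmall z zrs1.
set s := rem z rs1.
have P2 : P = ('X - q%:P) * (('X - z%:P) * \prod_(a <- s) ('X - a%:P)).
  by rewrite P1 (perm_big _ (perm_to_rem zrs1)) big_cons.
have in_s : forall a, root P a -> a != q -> a != z -> a \in s.
  move=> a ha naq naz.
  by rewrite -[s]/(rem z rs1) ; move: (in_rs1 a ha naq); rewrite (perm_mem (perm_to_rem zrs1)) inE (negPf naz).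
have hs : forall a, a \in s -> `|a| < 1 := fun a ha => hsmall a (mem_rem ha).
have allC : all (fun a => `|a| <= 1) s by apply/allP => a ha; exact: ltW (hs a ha).
have [c0le1 schurk] := schur _ allC.
set C := \prod_(a <- s) ('X - a%:P) in P2 c0le1 schurk.
have a0E : P`_0 = q * z * C`_0 by rewrite P2 coefXsubCM0 coefXsubCM0; ring.
have a0Z : P`_0 \is a Num.int := PZi 0%N.
have a0n0 : P`_0 != 0 by move: (nonzero_root q qn0); rewrite /root horner_coef0 -/P.
have a0ge1 : 1 <= `|P`_0| := norm_intr_ge1 a0Z a0n0.
have na0 : `|P`_0| = q * `|z| * `|C`_0| by rewrite a0E !normrM (gtr0_norm q0).
have [zR|zNR] := boolP (z \is Creal); last first.
  have hzc : root P z^* := conj_root q z hz.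
  have zcz : z^* != z by move: zNR; rewrite CrealE.
  have zcq : z^* != q.
    by apply/eqP => e; move: nzq; rewrite -(conjCK z) e (conj_Creal qR) eqxx.
  have zcs : z^* \in s := in_s _ hzc zcq zcz.
  have := c0_le _ _ zcs allC; rewrite -/C norm_conjC => hc0.
  have h1 : 1 <= q * `|z| ^+ 2.
    apply: (le_trans a0ge1); rewrite na0 expr2 mulrA; apply: ler_wpM2l => //.
    by rewrite mulr_ge0 // ltW.
  have h2 : 1 <= 2 * `|z| ^+ 2.
    apply: (le_trans h1); apply: ler_wpM2r; [exact: exprn_ge0 | exact: ltW].
  have h3 : `|z| ^+ 2 <= `|z| by rewrite expr2 ler_piMl // ltW.
  apply: (le_trans h2).
  have -> : 2 * `|z| ^+ 2 = `|z| ^+ 2 + `|z| ^+ 2 by ring.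
  by rewrite lerD2l.
have [s0|sn0] := eqVneq s [::].
  have C1 : C = 1 by rewrite /C s0 big_nil.
  have a0q : P`_0 = q * z by rewrite a0E C1 coefC /= mulr1.
  have a1q : P`_1 = - (q + z).
    by rewrite P2 C1 coefXsubCM1 coefXsubCM0 coefXsubCM1 !coef1 /=; ring.
  have /intrP [e he] := a0Z.
  have /intrP [m hm] := PZi 1%N.
  apply: (@deg2C q z (- m) e qR zR q1 q2 z1).
  - by rewrite -a0q he.
  - by apply: contra a0n0 => /eqP e0; rewrite he e0.
  - by rewrite rmorphN /= -hm a1q opprK.
have [b bs] : exists b, b \in s.
  by move: sn0; case: (s) => [|b l] // _; exists b; rewrite inE eqxx.
have c0lt1 : `|C`_0| < 1 := le_lt_trans (c0_le _ _ bs allC) (hs b bs).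
have zn0 : z != 0 by apply: contra a0n0 => /eqP ze; rewrite a0E ze mulr0 mul0r.
have qz0 : 0 < q * `|z| by rewrite mulr_gt0 // normr_gt0.
have a0lt2 : `|P`_0| < 2.
  rewrite na0; apply: le_lt_trans qlt2.
  rewrite -mulrA; apply: ler_piMr; first exact: ltW.
  by rewrite mulr_ile1 // ltW.
have /intrP [e he] := a0Z.
have ee : e = 1 \/ e = -1.
  move: a0lt2; rewrite (real_ltr_norml _ (Rreal_int a0Z)) he => /andP [l1 l2].
  apply: int_small.
  - by rewrite -(ltr_int algC).
  - by rewrite -(ltr_int algC).
  - by apply: contra a0n0 => /eqP e0; rewrite he e0.
have a0sq : P`_0 ^+ 2 = 1.
  by case: ee he => -> ->; rewrite ?rmorph1 ?rmorphN1 ?sqrrN expr1n.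
have na0' : `|P`_0| = 1.
  by case: ee he => -> ->; rewrite ?rmorph1 ?rmorphN1 ?normrN normr1.
have qz1 : 1 < q * `|z|.
  by rewrite -na0' na0 gtr_pMr.
set sg := \sum_(a <- s) a in schurk.
have Pl : P = \prod_(a <- [:: q, z & s]) ('X - a%:P) by rewrite P2 !big_cons.
have atE : P`_(size s).+1 = - (q + (z + sg)).
  by rewrite Pl (@coefPn_prod_XsubC _ [:: q, z & s]) // !big_cons.
have atZ := PZi (size s).+1.
have sgR : sg \is Creal.
  have -> : sg = - P`_(size s).+1 - q - z by rewrite atE; ring.
  apply: rpredB; last exact: zR.
  apply: rpredB; last exact: qR.
  rewrite rpredN; exact: Rreal_int.
rewrite (conj_Creal sgR) in schurk.
have a1E : P`_1 = q * z * C`_1 - (q + z) * C`_0.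
  by rewrite P2 coefXsubCM1 coefXsubCM0 coefXsubCM1; ring.
set c0 := C`_0 in a0E na0 c0lt1 schurk a1E.
set c1 := C`_1 in schurk a1E.
set a0 := P`_0 in a0E na0 na0' a0sq a0Z.
set a1 := P`_1 in a1E.
set atp := P`_(size s).+1 in atE atZ.
have uZ : a1 - a0 * atp \is a Num.int by rewrite rpredB ?rpredM // PZi.
have nZ : a0 * (a1 - a0 * atp) \is a Num.int by rewrite rpredM.
have /intrP [k hk] := nZ.
have id1 : q * z * (a1 - a0 * atp) - a0 * ((q + z) * (q * z - 1)) = (q * z) ^+ 2 * (c1 + c0 * sg).
  by rewrite a1E atE a0E; ring.
have W : q * z * k%:~R - (q + z) * (q * z - 1) = a0 * ((q * z) ^+ 2 * (c1 + c0 * sg)).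
  rewrite -hk -id1.
  transitivity (a0 * (q * z * (a1 - a0 * atp) - a0 * ((q + z) * (q * z - 1)))
     + (a0 ^+ 2 - 1) * ((q + z) * (q * z - 1))); first by ring.
  by rewrite a0sq subrr mul0r addr0.
have hW : `|q * z * k%:~R - (q + z) * (q * z - 1)| <= (q * z) ^+ 2 - 1.
  rewrite W normrM na0' mul1r normrM normrX.
  have eqz : `|q * z| = q * `|z| by rewrite normrM gtr0_norm.
  have sq : (q * z) ^+ 2 = (q * `|z|) ^+ 2 by rewrite -real_normK ?eqz // rpredM.
  rewrite eqz sq.
  apply: le_trans (ler_wpM2l (exprn_ge0 2 (ltW qz0)) schurk) _.
  have e1 : q * `|z| * `|c0| = 1 by rewrite -na0 na0'.
  by rewrite mulrBr mulr1 -exprMn e1 expr1n.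
exact: (@realkeyC q z k qR zR q1 q2 qz1 hW).
Qed.
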